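(* Let $F \colon Q = I \times J \to \mathbb{W}$ be a horizontal $(M,\epsilon)$-quasi-isometric embedding, where $I,J \subset \mathbb{R}$ are intervals with $|I| > 2M^{2}\sqrt{|J|} + 4M\epsilon$. Then for each fixed $(y_{0},t_{0}) \in Q$, the maps $y \mapsto \pi_{1}(F(y,t_{0}))$ and $t \mapsto \pi_{2}(F(y_{0},t))$ are $(M,2\epsilon)$-quasi-isometric embeddings $(I,|\cdot|) \to (\mathbb{R},|\cdot|)$ and $(J,\|\cdot\|) \to (\mathbb{R},\|\cdot\|)$, respectively.
   Context: $\mathbb{W}$ is $\mathbb{R}^{2}$ with the metric $d_{\mathrm{par}}((y,t),(\xi,\tau)) = \max\{|y-\xi|,|t-\tau|^{1/2}\}$; $\pi_{1}(y,t) = y$, $\pi_{2}(y,t) = t$; horizontal lines in $\mathbb{W}$ are the sets $\mathbb{R} \times \{t\}$. $\|x-y\| := \sqrt{|x-y|}$ is the square root metric on $\mathbb{R}$. A map $F \colon (X,d) \to (Y,d')$ is an $(M,\epsilon)$-quasi-isometric embedding if $M^{-1}d(x,y) - \epsilon \leq d'(F(x),F(y)) \leq Md(x,y) + \epsilon$ for all $x,y$. For a rectangle $Q = I \times J$, $F \colon Q \to \mathbb{W}$ is a horizontal $(M,\epsilon)$-quasi-isometric embedding if it is an $(M,\epsilon)$-quasi-isometric embedding w.r.t. $d_{\mathrm{par}}$ and for every $t \in J$ there is a horizontal line $\ell_{t} \subset \mathbb{W}$ with $F(I \times \{t\}) \subset \ell_{t}$. *)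

(* Defs.v *)
From Stdlib Require Import Reals.
Open Scope R_scope.

Definition W := (R * R)%type.
Definition pi1 (p : W) : R := fst p.
Definition pi2 (p : W) : R := snd p.
Definition d_par (p q : W) : R :=
  Rmax (Rabs (fst p - fst q)) (sqrt (Rabs (snd p - snd q))).

Definition d_eucl (x y : R) : R := Rabs (x - y).
Definition d_sqrt (x y : R) : R := sqrt (Rabs (x - y)).

Definition qi_embedding {X Y : Type} (A : X -> Prop) (d : X -> X -> R)
  (d' : Y -> Y -> R) (f : X -> Y) (M eps : R) : Prop :=
  forall x y, A x -> A y ->
    / M * d x y - eps <= d' (f x) (f y) /\ d' (f x) (f y) <= M * d x y + eps.

(* I is a bounded interval with endpoints a <= b (any of the four types);
   its length |I| is b - a. *)
Definition is_interval (I : R -> Prop) (a b : R) : Prop :=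
  a <= b /\ (forall x, a < x < b -> I x) /\ (forall x, I x -> a <= x <= b).

Definition rect (I J : R -> Prop) : W -> Prop := fun p => I (fst p) /\ J (snd p).

Definition horizontal_qi (I J : R -> Prop) (F : W -> W) (M eps : R) : Prop :=
  qi_embedding (rect I J) d_par d_par F M eps /\
  forall t, J t -> exists s : R, forall y, I y -> pi2 (F (y, t)) = s.

(* Main.v *)
Require Import Defs.
From Stdlib Require Import Reals Lra Psatz Classical.
Open Scope R_scope.

Lemma abs_le_iff x e : Rabs x <= e <-> -e <= x <= e.
Proof. unfold Rabs; destruct Rcase_abs; split; intros; lra. Qed.

Lemma div_le r M A : 0 < M -> r <= M * A -> r / M <= A.
Proof.
  intros HM H. apply Rmult_le_reg_l with M; [lra|].
  replace (M * (r / M)) with r by (field; lra). lra.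
Qed.

Lemma ivt_up (g : R -> R) u v q M eps d :
  u <= v -> 0 < d -> 0 < M ->
  (forall x y, u <= x <= v -> u <= y <= v -> Rabs (g x - g y) <= M * Rabs (x - y) + eps) ->
  g u <= q -> q <= g v ->
  exists z, u <= z <= v /\ Rabs (g z - q) <= (eps + d) / 2.
Proof.
  intros Huv Hd HM HU Hu Hv.
  set (S := fun x => u <= x <= v /\ g x <= q).
  assert (Hb : bound S) by (exists v; intros x [Hx _]; lra).
  assert (Hne : exists x, S x) by (exists u; split; [lra|exact Hu]).
  destruct (completeness S Hb Hne) as [s [Hs1 Hs2]].
  assert (Hus : u <= s) by (apply Hs1; split; [lra|exact Hu]).
  assert (Hsv : s <= v) by (apply Hs2; intros x [Hx _]; lra).
  set (h := d / (2 * M)).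
  assert (Hh : 0 < h) by (unfold h; apply Rdiv_lt_0_compat; lra).
  assert (HMh : M * h = d / 2) by (unfold h; field; lra).
  assert (Hx : exists x, S x /\ s - h < x).
  { destruct (classic (exists x, S x /\ s - h < x)) as [H|H]; [exact H|].
    exfalso. assert (s <= s - h); [|lra].
    apply Hs2. intros x Sx. destruct (Rle_or_lt x (s - h)); auto.
    exfalso; apply H; eauto. }
  destruct Hx as [x [[Hxi Hgx] Hxs]].
  assert (Hxs' : x <= s) by (apply Hs1; split; auto).
  assert (Hy : exists y, u <= y <= v /\ q <= g y /\ Rabs (x - y) <= 2 * h).
  { destruct (Rle_or_lt v (s + h / 2)).
    - exists v. split; [lra|]. split; [exact Hv|]. apply abs_le_iff; lra.
    - exists (s + h / 2). split; [lra|]. split.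
      + destruct (Rle_or_lt (g (s + h/2)) q); [|lra].
        assert (s + h/2 <= s); [|lra]. apply Hs1. split; [lra|auto].
      + apply abs_le_iff; lra. }
  destruct Hy as [y [Hyi [Hgy Hxy]]].
  pose proof (HU y x Hyi Hxi) as Hyx. rewrite Rabs_minus_sym in Hxy.
  assert (M * Rabs (y - x) <= M * (2 * h)) by (apply Rmult_le_compat_l; lra).
  apply abs_le_iff in Hyx.
  destruct (Rle_or_lt (q - g x) (g y - q)).
  - exists x. split; [lra|]. apply abs_le_iff; lra.
  - exists y. split; [lra|]. apply abs_le_iff; lra.
Qed.

Lemma ivt (g : R -> R) u v q M eps d :
  u <= v -> 0 < d -> 0 < M ->
  (forall x y, u <= x <= v -> u <= y <= v -> Rabs (g x - g y) <= M * Rabs (x - y) + eps) ->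
  (g u <= q <= g v \/ g v <= q <= g u) ->
  exists z, u <= z <= v /\ Rabs (g z - q) <= (eps + d) / 2.
Proof.
  intros Huv Hd HM HU [[H1 H2]|[H1 H2]].
  - eapply ivt_up; eauto.
  - destruct (ivt_up (fun x => - g x) u v (- q) M eps d) as [z [Hz Hgz]]; auto.
    + intros x y Hx Hy. replace (- g x - - g y) with (- (g x - g y)) by ring.
      rewrite Rabs_Ropp. auto.
    + lra.
    + lra.
    + exists z. split; auto. replace (g z - q) with (- (- g z - - q)) by ring.
      rewrite Rabs_Ropp. auto.
Qed.
Lemma fold (g : R -> R) m r p D M eps d :
  0 < M -> 0 <= eps -> 0 < d -> 0 < r -> 0 <= D ->
  (forall x y, m - r <= x <= m + r -> m - r <= y <= m + r -> Rabs (g x - g y) <= M * Rabs (x - y) + eps) ->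
  (forall x y, m - r <= x <= m + r -> m - r <= y <= m + r -> Rabs (x - y) <= M * (Rabs (g x - g y) + eps)) ->
  g m <= p + D -> p < g (m - r) -> p < g (m + r) -> M * (D + eps) < r ->
  M * M * M * (2 * eps + d) + M * (5 * eps + d) < 2 * r -> False.
Proof.
  intros HM He Hd Hr HD HU HL Hm H1 H2 HMD Hfin.
  set (K := r / M - eps).
  assert (HK : M * K = r - M * eps) by (unfold K; field; lra).
  assert (Hside : forall y, Rabs (y - m) = r -> p < g y -> g m + K <= g y).
  { intros y Hy Hpy.
    assert (Hyr : m - r <= y <= m + r) by (assert (Rabs (y - m) <= r) as HH by lra; apply abs_le_iff in HH; lra).
    pose proof (HL y m Hyr ltac:(lra)) as HLy. rewrite Hy in HLy.
    destruct (Rle_or_lt (g m) (g y)).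
    - rewrite Rabs_right in HLy by lra.
      assert (r / M <= g y - g m + eps) by (apply div_le; lra). unfold K; lra.
    - rewrite Rabs_left1 in HLy by lra.
      assert (M * (- (g y - g m) + eps) < M * (D + eps)) by (apply Rmult_lt_compat_l; lra).
      lra. }
  assert (Hy1 := Hside (m - r) ltac:(replace (m - r - m) with (- r) by ring; rewrite Rabs_Ropp, Rabs_right; lra) H1).
  assert (Hy2 := Hside (m + r) ltac:(replace (m + r - m) with r by ring; rewrite Rabs_right; lra) H2).
  assert (HK0 : 0 <= K).
  { assert (M * eps <= r) by nra. assert (eps <= r / M); [|unfold K; lra]. apply Rmult_le_reg_l with M; [lra|]. replace (M * (r / M)) with r by (field; lra). lra. }
  set (q := g m + K).
  destruct (ivt g (m - r) m q M eps d) as [z1 [Hz1 Hgz1]]; try lra.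
  { intros x y Hx Hy; apply HU; lra. }
  { unfold q; lra. }
  destruct (ivt g m (m + r) q M eps d) as [z2 [Hz2 Hgz2]]; try lra.
  { intros x y Hx Hy; apply HU; lra. }
  { unfold q; lra. }
  apply abs_le_iff in Hgz1. apply abs_le_iff in Hgz2.
  pose proof (HL z1 z2 ltac:(lra) ltac:(lra)) as L12.
  rewrite Rabs_left1 in L12 by lra.
  assert (Rabs (g z1 - g z2) <= eps + d) by (apply abs_le_iff; lra).
  assert (Hzz : z2 - z1 <= M * (2 * eps + d)).
  { assert (M * (Rabs (g z1 - g z2) + eps) <= M * (2 * eps + d)) by (apply Rmult_le_compat_l; lra). lra. }
  pose proof (HU z1 m ltac:(lra) ltac:(lra)) as U1.
  pose proof (HU z2 m ltac:(lra) ltac:(lra)) as U2.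
  rewrite (Rabs_left1 (z1 - m)) in U1 by lra. rewrite (Rabs_right (z2 - m)) in U2 by lra.
  pose proof (Rle_abs (g z1 - g m)). pose proof (Rle_abs (g z2 - g m)).
  assert (Hsum : 2 * K - 3 * eps - d <= M * (z2 - z1)) by (unfold q in *; lra).
  assert (M * (2 * K - 3 * eps - d) <= M * (M * (z2 - z1))) by (apply Rmult_le_compat_l; lra).
  assert (M * (M * (z2 - z1)) <= M * (M * (M * (2 * eps + d)))).
  { apply Rmult_le_compat_l; [lra|]. apply Rmult_le_compat_l; lra. }
  nra.
Qed.

Lemma Rmax_0r u : Rmax (Rabs u) (sqrt (Rabs 0)) = Rabs u.
Proof. rewrite Rabs_R0, sqrt_0. apply Rmax_left, Rabs_pos. Qed.

Lemma max_aux x y e : x < e -> e <= Rmax x y -> e <= y.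
Proof. unfold Rmax; destruct Rle_dec; lra. Qed.

Theorem lemma3p14 (I J : R -> Prop) (a b c d : R) (F : W -> W) (M eps : R)
  (hM : 1 <= M) (heps : 0 <= eps)
  (hI : is_interval I a b) (hJ : is_interval J c d)
  (hlen : b - a > 2 * M ^ 2 * sqrt (d - c) + 4 * M * eps)
  (hF : horizontal_qi I J F M eps) :
  forall y0 t0, I y0 -> J t0 ->
    qi_embedding I d_eucl d_eucl (fun y => pi1 (F (y, t0))) M (2 * eps) /\
    qi_embedding J d_sqrt d_sqrt (fun t => pi2 (F (y0, t))) M (2 * eps).
Proof.
  intros y0 t0 Hy0 Ht0.
  destruct hF as [HQ Hh].
  destruct hI as [hab [hIin hIout]]. destruct hJ as [hcd [hJin hJout]].
  assert (HM : 0 < M) by lra.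
  assert (Hg : forall t, J t -> forall y y', I y -> I y' ->
     Rabs (pi1 (F (y, t)) - pi1 (F (y', t))) <= M * Rabs (y - y') + eps /\
     / M * Rabs (y - y') - eps <= Rabs (pi1 (F (y, t)) - pi1 (F (y', t)))).
  { intros t Ht y y' Hy Hy'.
    destruct (Hh t Ht) as [s Hs].
    destruct (HQ (y, t) (y', t) (conj Hy Ht) (conj Hy' Ht)) as [L U].
    unfold d_par in L, U; simpl in L, U.
    unfold pi2 in Hs. rewrite (Hs y Hy), (Hs y' Hy') in L, U. rewrite !Rminus_diag, !Rmax_0r in L, U.
    unfold pi1. split; lra. }
  split.
  { intros y y' Hy Hy'. unfold d_eucl. destruct (Hg t0 Ht0 y y' Hy Hy'). split; lra. }
  intros t t' Ht Ht'. unfold d_sqrt.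
  set (S := sqrt (Rabs (t - t'))).
  assert (HS0 : 0 <= S) by apply sqrt_pos.
  assert (Hf : forall y, I y -> pi2 (F (y, t)) = pi2 (F (y0, t)) /\ pi2 (F (y, t')) = pi2 (F (y0, t'))).
  { intros y Hy. destruct (Hh t Ht) as [s Hs]. destruct (Hh t' Ht') as [s' Hs'].
    rewrite (Hs y Hy), (Hs y0 Hy0), (Hs' y Hy), (Hs' y0 Hy0). auto. }
  assert (Hdt : forall y, d_par (y, t) (y, t') = S).
  { intros y. unfold d_par; simpl. rewrite Rminus_diag, Rabs_R0. apply Rmax_right, sqrt_pos. }
  destruct (HQ (y0, t) (y0, t') (conj Hy0 Ht) (conj Hy0 Ht')) as [L0 U0].
  rewrite Hdt in L0, U0. unfold d_par in L0, U0; simpl in L0, U0.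
  fold (pi2 (F (y0, t))) in *. fold (pi2 (F (y0, t'))) in *.
  pose proof (Rmax_r (Rabs (fst (F (y0, t)) - fst (F (y0, t')))) (sqrt (Rabs (pi2 (F (y0, t)) - pi2 (F (y0, t')))))).
  split; [| lra].
  set (X := / M * S).
  destruct (Rle_or_lt X (2 * eps)) as [HX|HX].
  { pose proof (sqrt_pos (Rabs (pi2 (F (y0, t)) - pi2 (F (y0, t'))))). fold X; lra. }
  fold X.
  cut (exists y y', I y /\ I y' /\ Rabs (pi1 (F (y, t)) - pi1 (F (y', t'))) < X - eps).
  { intros [y [y' [Hy [Hy' Hyy]]]].
    destruct (HQ (y, t) (y', t') (conj Hy Ht) (conj Hy' Ht')) as [L1 _].
    unfold d_par in L1; simpl in L1.
    fold (pi2 (F (y, t))) (pi2 (F (y', t'))) in L1.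
    rewrite (proj1 (Hf y Hy)), (proj2 (Hf y' Hy')) in L1.
    pose proof (Rmax_r (Rabs (y - y')) (sqrt (Rabs (t - t')))).
    fold S in H0.
    assert (/ M * S <= / M * Rmax (Rabs (y - y')) S).
    { apply Rmult_le_compat_l; auto. left; apply Rinv_0_lt_compat; lra. }
    fold X in H1. unfold pi1 in Hyy.
    apply Rle_trans with (X - eps); [lra|]. apply (max_aux (Rabs (fst (F (y, t)) - fst (F (y', t'))))); [lra|]. eapply Rle_trans; [|exact L1]. fold S. lra. }
  assert (HSc : S <= sqrt (d - c)).
  { apply sqrt_le_1_alt. pose proof (hJout t Ht). pose proof (hJout t' Ht').
    unfold Rabs; destruct Rcase_abs; lra. }
  assert (HXS : M * X = S) by (unfold X; field; lra).
  assert (HS2 : S > 2 * M * eps) by nra.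
  set (m := (a + b) / 2).
  set (rho := ((b - a) / 2 - M ^ 2 * S - 2 * M * eps) / 2).
  assert (HM2 : M ^ 2 * S <= M ^ 2 * sqrt (d - c)) by (apply Rmult_le_compat_l; nra).
  assert (Hrho : 0 < rho) by (unfold rho; lra).
  set (r := M ^ 2 * S + 2 * M * eps + rho).
  assert (Hr : 0 < r) by (unfold r; nra).
  assert (Hr2 : r = (b - a) / 2 - rho) by (unfold r, rho; field).
  set (g := fun y => pi1 (F (y, t))).
  set (p := pi1 (F (m, t'))).
  assert (Hint : forall x, m - r <= x <= m + r -> I x) by (intros x Hx; apply hIin; unfold m in *; lra).
  assert (Hm : I m) by (apply Hint; lra).
  assert (Hgm : Rabs (g m - p) <= M * S + eps).
  { destruct (HQ (m, t) (m, t') (conj Hm Ht) (conj Hm Ht')) as [_ U1].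
    rewrite Hdt in U1. unfold d_par in U1. pose proof (Rmax_l (Rabs (fst (F (m, t)) - fst (F (m, t')))) (sqrt (Rabs (snd (F (m, t)) - snd (F (m, t')))))).
    unfold g, p, pi1. lra. }
  assert (HU : forall x y, m - r <= x <= m + r -> m - r <= y <= m + r -> Rabs (g x - g y) <= M * Rabs (x - y) + eps).
  { intros x y Hx Hy. apply (Hg t Ht x y (Hint x Hx) (Hint y Hy)). }
  assert (HL : forall x y, m - r <= x <= m + r -> m - r <= y <= m + r -> Rabs (x - y) <= M * (Rabs (g x - g y) + eps)).
  { intros x y Hx Hy. destruct (Hg t Ht x y (Hint x Hx) (Hint y Hy)) as [_ H2].
    fold (g x) (g y) in H2.
    replace (Rabs (x - y)) with (M * (/ M * Rabs (x - y))) by (field; lra).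
    apply Rmult_le_compat_l; lra. }
  set (dd := rho / (M * M * M + M)).
  assert (Hdd : (M * M * M + M) * dd = rho) by (unfold dd; field; nra).
  assert (Hdd0 : 0 < dd) by (unfold dd; apply Rdiv_lt_0_compat; nra).
  assert (HM3 : M * eps <= M * M * M * eps).
  { assert (1 <= M * M) by nra. assert (0 <= M * eps * (M * M - 1)) by (apply Rmult_le_pos; [apply Rmult_le_pos|]; lra). nra. }
  assert (HSM : M * M * (2 * M * eps) < M * M * S) by (apply Rmult_lt_compat_l; nra).
  assert (Hfin : M * M * M * (2 * eps + dd) + M * (5 * eps + dd) < 2 * r).
  { unfold r. replace (M ^ 2) with (M * M) by ring. nra. }
  assert (HMD : M * ((M * S + eps) + eps) < r) by (unfold r; replace (M ^ 2) with (M * M) by ring; nra).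
  assert (Hcase : (p < g (m - r) /\ p < g (m + r)) \/ (g (m - r) < p /\ g (m + r) < p) \/
     (g (m - r) <= p <= g (m + r) \/ g (m + r) <= p <= g (m - r))).
  { destruct (Rlt_or_le p (g (m - r))), (Rlt_or_le p (g (m + r))), (Rlt_or_le (g (m - r)) p), (Rlt_or_le (g (m + r)) p);
    first [left; split; lra | right; left; split; lra | right; right; left; split; lra | right; right; right; split; lra]. }
  destruct Hcase as [[A1 A2]|[[A1 A2]|Hb]].
  - exfalso. apply (fold g m r p (M * S + eps) M eps dd); auto; try nra.
    apply abs_le_iff in Hgm; lra.
  - exfalso. apply (fold (fun y => - g y) m r (- p) (M * S + eps) M eps dd); auto; try nra.
    + intros x y Hx Hy. replace (- g x - - g y) with (- (g x - g y)) by ring. rewrite Rabs_Ropp; auto.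
    + intros x y Hx Hy. replace (- g x - - g y) with (- (g x - g y)) by ring. rewrite Rabs_Ropp; auto.
    + apply abs_le_iff in Hgm; lra.
  - destruct (ivt g (m - r) (m + r) p M eps (X - 2 * eps)) as [z [Hz Hgz]]; try lra; auto.
    exists z, m. repeat split; auto. fold (g z). fold p. lra.
Qed.
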